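(* Let $\Sigma$ be an alphabet with $|\Sigma|\ge 2$ and let $W\subseteq\Sigma^*$ be any finite set of words. Then there exist minimized DFAs $D$ and $D'$ over $\Sigma$ with $F(D)=F(D')=\varnothing$ and $L(D)\triangle L(D')=W$.
   Context: All DFAs are complete and all states are reachable; a DFA is \emph{minimized} if it is the minimal DFA for its language. For a DFA $D$ with start state $q_0$ and transition function $\delta$, the finite part $F(D)$ is the set of states $r$ such that $\{w\in\Sigma^*:\delta(q_0,w)=r\}$ is finite. *)

(* Defs.v *)
From mathcomp Require Import all_boot.
Set Implicit Arguments. Unset Strict Implicit. Unset Printing Implicit Defensive.

Record dfa (Sigma : finType) := DFA {
  state : finType;
  delta : state -> Sigma -> state;
  start : state;
  accept : {set state}
}.

Definition run (Sigma : finType) (D : dfa Sigma) (q : state D) (w : seq Sigma)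
  : state D := foldl (@delta Sigma D) q w.

Definition accepts (Sigma : finType) (D : dfa Sigma) (w : seq Sigma) : bool :=
  run (start D) w \in accept D.

Definition all_reachable (Sigma : finType) (D : dfa Sigma) : Prop :=
  forall q : state D, exists w : seq Sigma, run (start D) w = q.

Definition same_language (Sigma : finType) (D D' : dfa Sigma) : Prop :=
  forall w : seq Sigma, accepts D w = accepts D' w.

Definition minimized (Sigma : finType) (D : dfa Sigma) : Prop :=
  all_reachable D /\
  forall D' : dfa Sigma, same_language D D' -> #|state D| <= #|state D'|.

Definition in_finite_part (Sigma : finType) (D : dfa Sigma) (r : state D) : Prop :=
  exists s : seq (seq Sigma), forall w, run (start D) w = r -> w \in s.

Definition finite_part_empty (Sigma : finType) (D : dfa Sigma) : Prop :=
  forall r : state D, ~ in_finite_part r.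

(* Main.v *)
Require Import Defs.
From mathcomp Require Import all_boot.
From Stdlib Require Import ClassicalEpsilon.
Set Implicit Arguments. Unset Strict Implicit. Unset Printing Implicit Defensive.

Definition decb (P : Prop) : bool :=
  if excluded_middle_informative P then true else false.
Lemma decbP (P : Prop) : reflect P (decb P).
Proof. by rewrite /decb; case: excluded_middle_informative => h; constructor. Qed.

Lemma run_cat (Sigma : finType) (D : dfa Sigma) q u v :
  @run _ D q (u ++ v) = run (run q u) v.
Proof. by rewrite /run foldl_cat. Qed.

Section Min.
Variables (Sigma : finType) (A : dfa Sigma).

Definition equivP (q q' : state A) : Prop :=
  forall z, (run q z \in accept A) = (run q' z \in accept A).
Definition equivb q q' := decb (equivP q q').
Definition reachb (q : state A) := decb (exists w, run (start A) w = q).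
Definition canon (q : state A) :=
  odflt q [pick q' | reachb q' && equivb q q'].

Lemma equiv_refl q : equivP q q. Proof. by []. Qed.
Lemma equiv_sym q q' : equivP q q' -> equivP q' q. Proof. by move=> h z; rewrite h. Qed.
Lemma equiv_trans q1 q2 q3 : equivP q1 q2 -> equivP q2 q3 -> equivP q1 q3.
Proof. by move=> h1 h2 z; rewrite h1 h2. Qed.
Lemma equiv_run q q' w : equivP q q' -> equivP (run q w) (run q' w).
Proof. by move=> h z; rewrite -!run_cat h. Qed.
Lemma reach_run q w : reachb q -> reachb (run q w).
Proof.
move/decbP=> [u hu]; apply/decbP; exists (u ++ w); by rewrite run_cat hu.
Qed.
Lemma reach_start : reachb (start A).
Proof. by apply/decbP; exists [::]. Qed.

Lemma canon_spec q : reachb q -> reachb (canon q) /\ equivP q (canon q).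
Proof.
move=> rq; rewrite /canon; case: pickP => [q' /andP [r' /decbP e]|h] //=.
Qed.

Lemma canon_eq q q' : reachb q' -> equivP q q' -> canon q = canon q'.
Proof.
move=> rq' e; rewrite /canon.
have -> : [pick q'' | reachb q'' && equivb q q''] = [pick q'' | reachb q'' && equivb q' q''].
  apply: eq_pick => q''; congr (_ && _); apply/decbP/decbP => h.
    exact: equiv_trans (equiv_sym e) h.
  exact: equiv_trans e h.
case: pickP => //= h.
by have := h q'; rewrite rq' /=; move/negbT/negP; case; apply/decbP.
Qed.

Lemma canon_idem q : reachb q -> canon (canon q) = canon q.
Proof.
move=> rq; have [r1 e1] := canon_spec rq.
exact: canon_eq (equiv_sym e1).
Qed.

Definition mpred q := reachb q && (canon q == q).
Definition mstate := {q : state A | mpred q}.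

Lemma mpred_canon q : reachb q -> mpred (canon q).
Proof. move=> rq; have [r1 _] := canon_spec rq; by rewrite /mpred r1 canon_idem ?eqxx. Qed.

Definition mdelta (s : mstate) (x : Sigma) : mstate :=
  exist _ (canon (delta (sval s) x))
    (mpred_canon (reach_run [:: x] (proj1 (andP (proj2_sig s))))).
Definition mstart : mstate := exist _ (canon (start A)) (mpred_canon reach_start).
Definition macc : {set mstate} := [set s : mstate | sval s \in accept A].
Definition mdfa := @DFA Sigma mstate mdelta mstart macc.

Lemma mrun (s : mstate) w : sval (@run _ mdfa s w) = canon (run (sval s) w).
Proof.
elim: w s => [|x w IH] s /=.
  by case: s => q hq; case/andP: (hq) => _ /eqP h; rewrite /run /= h.
rewrite /run /= -/(run _ _) -/(run _ _) IH /=.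
have rs := proj1 (andP (proj2_sig s)).
have rd := reach_run [:: x] rs.
have [r1 e1] := canon_spec rd.
apply: canon_eq; first exact: reach_run.
exact: equiv_run (equiv_sym e1).
Qed.

Lemma mrun_start w : sval (@run _ mdfa (start mdfa) w) = canon (run (start A) w).
Proof.
rewrite mrun /=.
have [r1 e1] := canon_spec reach_start.
apply: canon_eq; first exact: reach_run reach_start.
exact: equiv_run (equiv_sym e1).
Qed.

Lemma maccepts w : accepts mdfa w = accepts A w.
Proof.
rewrite /accepts /= inE mrun_start.
have [_ e1] := canon_spec (reach_run w reach_start).
by have := e1 [::]; rewrite /run /= => ->.
Qed.

Lemma mreach : all_reachable mdfa.
Proof.
move=> s; case: (s) => q hq; case/andP: (hq) => /decbP [w hw] /eqP hc.
exists w; apply: val_inj; by rewrite /= mrun_start hw.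
Qed.

Lemma mminimal : minimized mdfa.
Proof.
split; first exact: mreach.
move=> D2 same.
have wit : forall s : mstate, {w | run (start mdfa) w = s}.
  move=> s; apply: constructive_indefinite_description; exact: mreach.
pose g (s : mstate) := run (start D2) (sval (wit s)).
have : injective g.
  move=> s1 s2; rewrite /g.
  case: (wit s1) => w1 h1; case: (wit s2) => w2 h2 /= e.
  have eq : equivP (run (start A) w1) (run (start A) w2).
    move=> z; rewrite -!run_cat.
    change (accepts A (w1 ++ z) = accepts A (w2 ++ z)).
    by rewrite -!maccepts !same /accepts !run_cat e.
  rewrite -h1 -h2; apply: val_inj.
  have E1 := mrun_start w1; have E2 := mrun_start w2.
  refine (etrans E1 (etrans _ (esym E2))).
  apply: canon_eq eq; exact: reach_run reach_start.
move/leq_card; by rewrite !cardE.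
Qed.
End Min.

Lemma cycle_fpe (Sigma : finType) (D : dfa Sigma) r :
  r != [::] -> run (start D) r = start D -> all_reachable D -> finite_part_empty D.
Proof.
move=> rn hr reach q [S hS].
have [u hu] := reach q.
have [n hn] : exists n, forall w, w \in S -> size w < n.
  elim: S {hS} => [|y S [n hn]]; first by exists 0.
  exists (maxn n (size y).+1) => w; rewrite inE => /orP [/eqP ->|/hn h].
    by rewrite leq_max leqnn orbT.
  by rewrite leq_max h.
have rk : forall k, run (start D) (flatten (nseq k r) ++ u) = q.
  elim=> [|k IH] //=; by rewrite -catA run_cat hr.
have := hn _ (hS _ (rk n)).
rewrite size_cat size_flatten.
suff : n <= sumn (shape (nseq n r)) by move=> h1; rewrite ltnNge (leq_trans h1 (leq_addr _ _)).
rewrite /shape map_nseq; case: r rn {hr rk} => // x r _ /=.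
elim: n {hn} => //= n IH; by rewrite ltnS (leq_trans IH (leq_addl _ _)).
Qed.

Section Conc.
Variables (Sigma : finType) (W : seq (seq Sigma)) (b : Sigma).

Definition N := foldr (fun w n => maxn (size w) n) 0 W.
Lemma sizeW w : w \in W -> size w <= N.
Proof.
rewrite /N; elim: W => //= y s IH; rewrite inE => /orP [/eqP ->|/IH h].
  by rewrite leq_max leqnn.
by rewrite leq_max h orbT.
Qed.

Definition S := [seq take i w | w <- W, i <- iota 0 (size w).+1].


Lemma take_inS w i : w \in W -> take i w \in S.
Proof.
move=> hw; wlog hi : i / i <= size w.
  move=> h; case: (leqP i (size w)) => [|hl]; first exact: h.
  by rewrite take_oversize ?(ltnW hl) // -{1}(take_size w); apply: h.
apply/allpairsPdep; exists w, i; split => //; by rewrite mem_iota.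
Qed.

Lemma S_rcons u x : rcons u x \in S -> u \in S.
Proof.
case/allpairsPdep => w [i [hw _ e]].
have : u = take (size u) (rcons u x) by rewrite -cats1 take_size_cat.
rewrite e -take_min => ->; exact: take_inS.
Qed.

Definition stT := (bool * 'I_N.+1 * option (seq_sub S))%type.
Definition nxt (o : option (seq_sub S)) x : option (seq_sub S) :=
  if o is Some u then insub (rcons (val u) x) else None.
Lemma nxt_insub u x : nxt (insub u) x = insub (rcons u x).
Proof.
case: insubP => [v hv <-|hn] //=.
by rewrite insubN //; apply: contra hn; apply: S_rcons.
Qed.

Definition dlt (s : stT) (x : Sigma) : stT :=
  let: (p, k, o) := s in
  if k < N then (p, inord k.+1, nxt o x) else (x == b, ord0, insub [::]).
Definition acc : {set stT} :=
  [set s : stT | s.1.1 && (if s.2 is Some u then val u \in W else false)].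
Definition Ap (p : bool) := @DFA Sigma stT dlt (p, ord0, insub [::]) acc.

Lemma accW z : (if insub z is Some u then ssval (u : seq_sub S) \in W else false) = (z \in W).
Proof.
case: insubP => [v hv -> //|hn].
apply/esym/negbTE; apply: contra hn => hz.
by rewrite -(take_size z); apply: take_inS.
Qed.

Lemma run_short p z : size z <= N ->
  run (start (Ap p)) z = (p, inord (size z), insub z).
Proof.
elim/last_ind: z => [|z x IH] hz.
  rewrite /run /=; congr (_, _, _); apply: val_inj; by rewrite /= inordK.
rewrite size_rcons in hz.
rewrite /run foldl_rcons -/(run _ _) IH ?(ltnW hz) //= inordK ?hz; last by rewrite ltnS ltnW.
by rewrite nxt_insub size_rcons.
Qed.

Lemma run_long p z : N < size z ->
  run (start (Ap p)) z = run (start (Ap (nth b z N == b))) (drop N.+1 z).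
Proof.
move=> hz.
have E : z = take N z ++ nth b z N :: drop N.+1 z by rewrite -(drop_nth b hz) cat_take_drop.
rewrite {1}E run_cat.
rewrite run_short ?size_take ?hz //= /run /= inordK ?hz //= ltnn.
by [].
Qed.

Lemma diffW w : (accepts (Ap false) w != accepts (Ap true) w) = (w \in W).
Proof.
case: (leqP (size w) N) => h.
  rewrite /accepts !run_short // !inE /=; apply: (etrans _ (accW w)). by rewrite eq_sym eqbF_neg negbK.
rewrite /accepts.
rewrite (run_long false h) (run_long true h) eqxx /=.
apply/esym/negbTE/negP => /sizeW; by rewrite leqNgt h.
Qed.

Lemma cyc p a : a != b ->
  run (start (Ap p)) (rcons (nseq N a) (if p then b else a)) = start (Ap p).
Proof.
move=> ab; rewrite run_long ?size_rcons ?size_nseq //.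
rewrite nth_rcons size_nseq ltnn eqxx -cats1 drop_cat size_nseq ltnNge leqnSn /=.
rewrite subSn // subnn /=.
by case: p; rewrite ?eqxx ?(negbTE ab).
Qed.
End Conc.

Lemma mcycle (Sigma : finType) (A : dfa Sigma) r :
  run (start A) r = start A -> run (start (mdfa A)) r = start (mdfa A).
Proof.
move=> h; apply: val_inj.
have E := mrun_start A r.
refine (etrans E _); by rewrite h.
Qed.

Theorem mainTheorem11 (Sigma : finType) (W : seq (seq Sigma)) :
  2 <= #|Sigma| ->
  exists D D' : dfa Sigma,
    [/\ minimized D, minimized D',
        finite_part_empty D, finite_part_empty D' &
        forall w : seq Sigma, (accepts D w != accepts D' w) = (w \in W)].
Proof.
move=> /card_gt1P [a [b [_ _ ab]]].
exists (mdfa (Ap W b false)), (mdfa (Ap W b true)); split.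
- exact: mminimal.
- exact: mminimal.
- apply: (@cycle_fpe _ _ (rcons (nseq (N W) a) (if false then b else a))).
    by rewrite -cats1; case: (nseq _ _).
  exact/mcycle/cyc. exact: mreach.
- apply: (@cycle_fpe _ _ (rcons (nseq (N W) a) (if true then b else a))).
    by rewrite -cats1; case: (nseq _ _).
  exact/mcycle/cyc. exact: mreach.
- move=> w; rewrite !maccepts; exact: diffW.
Qed.
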